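(* Let $d\ge2$, $\mathcal{X}=\{0,\dots,d-1\}$, and let $P_{XABC}$ be a probability distribution on $\mathcal{X}\times\{0,1\}^3$. Define $\omega_{\mathrm{c}}=\max_{f,g,h}\sum_{x,a,b,c}P_{XABC}(x,a,b,c)\,\delta[f(a)=g(b)=h(c)=x]$, maximized over functions $f,g,h\colon\{0,1\}\to\mathcal{X}$. Then $$\omega_{\mathrm{c}}=\max_{s,t\in\mathcal{X},\,s\ne t}\max\left\{\begin{matrix}P_X(s),\\ P_{XABC}(s,0,0,0)+P_{XABC}(t,1,1,1),\\ P_{XABC}(s,1,0,0)+P_{XABC}(t,0,1,1),\\ P_{XABC}(s,0,1,0)+P_{XABC}(t,1,0,1),\\ P_{XABC}(s,0,0,1)+P_{XABC}(t,1,1,0)\end{matrix}\right\}.$$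
   Context: $\delta$ is the indicator function; $P_X$ is the marginal of $P_{XABC}$ on $\mathcal{X}$. $\omega_{\mathrm{c}}$ is the optimal classical winning probability of the three-player LSSD game in which a referee samples $(x,a,b,c)\sim P_{XABC}$, sends $a,b,c$ to three non-communicating players, who win iff all three output $x$. *)

(* Defs.v *)
From mathcomp Require Import all_boot all_order all_algebra.
Set Implicit Arguments. Unset Strict Implicit. Unset Printing Implicit Defensive.
Import Order.TTheory GRing.Theory Num.Theory.
Local Open Scope ring_scope.

(* Bits {0,1} are encoded as bool: false = 0, true = 1.
   A distribution P_{XABC} on X x {0,1}^3 with X = 'I_d. *)

Definition is_distr (R : realFieldType) (d : nat)
  (P : 'I_d -> bool -> bool -> bool -> R) : Prop :=
  (forall x a b c, 0 <= P x a b c) /\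
  \sum_(x : 'I_d) \sum_(a : bool) \sum_(b : bool) \sum_(c : bool) P x a b c = 1.

Definition marginalX (R : realFieldType) (d : nat)
  (P : 'I_d -> bool -> bool -> bool -> R) (x : 'I_d) : R :=
  \sum_(a : bool) \sum_(b : bool) \sum_(c : bool) P x a b c.

Definition win_prob (R : realFieldType) (d : nat)
  (P : 'I_d -> bool -> bool -> bool -> R) (f g h : bool -> 'I_d) : R :=
  \sum_(x : 'I_d) \sum_(a : bool) \sum_(b : bool) \sum_(c : bool)
     P x a b c * ((f a == x) && (g b == x) && (h c == x))%:R.

(* optimal classical winning probability: max over all f, g, h : {0,1} -> X.
   (All values are >= 0 for a distribution, so 0 is a neutral start.) *)
Definition omega_c (R : realFieldType) (d : nat)
  (P : 'I_d -> bool -> bool -> bool -> R) : R :=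
  \big[Num.max/0]_(fgh : {ffun bool -> 'I_d} * {ffun bool -> 'I_d} * {ffun bool -> 'I_d})
     win_prob P fgh.1.1 fgh.1.2 fgh.2.

(* Main.v *)
Require Import Defs.
From mathcomp Require Import all_boot all_order all_algebra.
From mathcomp Require Import lra.
Set Implicit Arguments. Unset Strict Implicit. Unset Printing Implicit Defensive.
Import Order.TTheory GRing.Theory Num.Theory.
Local Open Scope ring_scope.

Lemma le_bigmaxX (R : realFieldType) (I : finType) (Q : pred I) (F : I -> R) i :
  Q i -> F i <= \big[Num.max/0]_(j | Q j) F j.
Proof.
move=> Qi; have : i \in index_enum I by rewrite mem_index_enum.
elim: (index_enum I) => // j r IH; rewrite inE big_cons => /orP[/eqP<-|ir].
  by rewrite Qi le_max lexx.
by case: ifP => _; rewrite ?le_max IH ?orbT.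
Qed.

Lemma bigmax_leX (R : realFieldType) (I : finType) (Q : pred I) (F : I -> R) c :
  0 <= c -> (forall i, Q i -> F i <= c) -> \big[Num.max/0]_(j | Q j) F j <= c.
Proof.
move=> c0 H; apply: (big_ind (fun x => x <= c)) => //.
by move=> x y xc yc; rewrite ge_max xc yc.
Qed.

Definition rhs (R : realFieldType) (d : nat)
  (P : 'I_d -> bool -> bool -> bool -> R) : R :=
  \big[Num.max/0]_(st : 'I_d * 'I_d | st.1 != st.2)
    Num.max (marginalX P st.1)
    (Num.max (P st.1 false false false + P st.2 true true true)
    (Num.max (P st.1 true false false + P st.2 false true true)
    (Num.max (P st.1 false true false + P st.2 true false true)
             (P st.1 false false true + P st.2 true true false)))).

Lemma anti_le (R : realFieldType) (d : nat) (P : 'I_d -> bool -> bool -> bool -> R)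
  s t a b c : s != t ->
  P s a b c + P t (~~a) (~~b) (~~c) <= rhs P.
Proof.
move=> st; have ts : t != s by rewrite eq_sym.
case: a; case: b; case: c => /=.
- apply: le_trans (le_bigmaxX _ (i := (t, s)) ts) => /=.
  by rewrite addrC !le_max lexx !orbT.
- apply: le_trans (le_bigmaxX _ (i := (t, s)) ts) => /=.
  by rewrite addrC !le_max lexx !orbT.
- apply: le_trans (le_bigmaxX _ (i := (t, s)) ts) => /=.
  by rewrite addrC !le_max lexx !orbT.
- apply: le_trans (le_bigmaxX _ (i := (s, t)) st) => /=.
  by rewrite !le_max lexx !orbT.
- apply: le_trans (le_bigmaxX _ (i := (t, s)) ts) => /=.
  by rewrite addrC !le_max lexx !orbT.
- apply: le_trans (le_bigmaxX _ (i := (s, t)) st) => /=.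
  by rewrite !le_max lexx !orbT.
- apply: le_trans (le_bigmaxX _ (i := (s, t)) st) => /=.
  by rewrite !le_max lexx !orbT.
- apply: le_trans (le_bigmaxX _ (i := (s, t)) st) => /=.
  by rewrite !le_max lexx !orbT.
Qed.

Lemma other (d : nat) (hd : (2 <= d)%N) (s : 'I_d) : exists t : 'I_d, s != t.
Proof.
have h0 : (0 < d)%N by apply: leq_trans hd.
case: (eqVneq s (Ordinal h0)) => [->|ne]; last by exists (Ordinal h0).
by exists (Ordinal hd).
Qed.

Lemma marg_le (R : realFieldType) (d : nat) (hd : (2 <= d)%N)
  (P : 'I_d -> bool -> bool -> bool -> R) s : marginalX P s <= rhs P.
Proof.
have [t st] := other hd s.
apply: le_trans (le_bigmaxX _ (i := (s, t)) st) => /=.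
by rewrite le_max lexx.
Qed.

Lemma marg_ge0 (R : realFieldType) (d : nat)
  (P : 'I_d -> bool -> bool -> bool -> R) (hP : is_distr P) s : 0 <= marginalX P s.
Proof. by do 3 (apply: sumr_ge0 => ? _); case: hP. Qed.

Definition Bw (d : nat) (f g h : bool -> 'I_d) a b c := (g b == f a) && (h c == f a).
Definition term (R : realFieldType) (d : nat) (P : 'I_d -> bool -> bool -> bool -> R)
  (f g h : bool -> 'I_d) a b c := if Bw f g h a b c then P (f a) a b c else 0.

Lemma win_term (R : realFieldType) (d : nat) (P : 'I_d -> bool -> bool -> bool -> R)
  (f g h : bool -> 'I_d) :
  win_prob P f g h = \sum_a \sum_b \sum_c term P f g h a b c.
Proof.
rewrite /win_prob exchange_big; apply: eq_bigr => a _.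
rewrite exchange_big; apply: eq_bigr => b _.
rewrite exchange_big; apply: eq_bigr => c _.
rewrite (bigD1 (f a)) //= eqxx /= big1 ?addr0.
  by rewrite /term /Bw; case: ifP => _; rewrite ?mulr1 ?mulr0.
by move=> x /negbTE fx; rewrite [f a == x]eq_sym fx /= mulr0.
Qed.

Lemma win_le_marg (R : realFieldType) (d : nat) (P : 'I_d -> bool -> bool -> bool -> R)
  (hP : is_distr P) (f g h : bool -> 'I_d) s :
  (forall a b c, Bw f g h a b c -> f a = s) -> win_prob P f g h <= marginalX P s.
Proof.
move=> H; rewrite win_term /marginalX.
apply: ler_sum => a _; apply: ler_sum => b _; apply: ler_sum => c _.
rewrite /term; case: ifP => HB; first by rewrite (H _ _ _ HB).
by case: hP.
Qed.

Lemma Bfalse (d : nat) (f g h : bool -> 'I_d) :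
  f true != f false -> g true != g false -> h true != h false ->
  forall a b c, Bw f g h a b c -> forall a' b' c',
  ~~ [&& a' == a, b' == b & c' == c] && ~~ [&& a' == ~~a, b' == ~~b & c' == ~~c] ->
  Bw f g h a' b' c' = false.
Proof.
move=> /eqP hf /eqP hg /eqP hh a b c Hw a' b' c' cond; apply/negP => Hw'.
move: Hw Hw' => /andP[/eqP e1 /eqP e2] /andP[/eqP e3 /eqP e4].
by case: a b c a' b' c' cond e1 e2 e3 e4 => [] [] [] [] [] [] //= *; congruence.
Qed.

Lemma termF (R : realFieldType) (d : nat) (P : 'I_d -> bool -> bool -> bool -> R)
  (f g h : bool -> 'I_d) a b c : Bw f g h a b c = false -> term P f g h a b c = 0.
Proof. by rewrite /term => ->. Qed.

Lemma up_inj (R : realFieldType) (d : nat) (P : 'I_d -> bool -> bool -> bool -> R)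
  (hP : is_distr P) (f g h : bool -> 'I_d) :
  f true != f false -> g true != g false -> h true != h false ->
  forall a b c, Bw f g h a b c -> win_prob P f g h <= rhs P.
Proof.
move=> hf hg hh a b c Hw.
have -> : win_prob P f g h = term P f g h a b c + term P f g h (~~a) (~~b) (~~c).
  rewrite win_term; move: Hw; case: a; case: b; case: c => Hw;
  rewrite !big_bool /=;
  repeat match goal with |- context [term P f g h ?a ?b ?c] =>
    rewrite (termF P (@Bfalse _ f g h hf hg hh _ _ _ Hw a b c isT)) end; lra.
have fa : f a != f (~~a) by case: a {Hw}; rewrite // eq_sym.
apply: le_trans (@anti_le _ _ P _ _ a b c fa).
have t0 : forall a b c, term P f g h a b c <= P (f a) a b c.
  by move=> *; rewrite /term; case: ifP => // _; case: hP.
by apply: lerD.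
Qed.

Lemma omega_ge (R : realFieldType) (d : nat) (P : 'I_d -> bool -> bool -> bool -> R)
  (f g h : {ffun bool -> 'I_d}) : win_prob P f g h <= omega_c P.
Proof. exact: (@le_bigmaxX R _ xpredT (fun fgh : {ffun bool -> 'I_d} * {ffun bool -> 'I_d} * {ffun bool -> 'I_d} => win_prob P fgh.1.1 fgh.1.2 fgh.2) (f, g, h)). Qed.

Lemma strat_const (R : realFieldType) (d : nat) (P : 'I_d -> bool -> bool -> bool -> R) s :
  win_prob P [ffun=> s] [ffun=> s] [ffun=> s] = marginalX P s.
Proof.
rewrite win_term /marginalX; do 3 (apply: eq_bigr => ? _).
by rewrite /term /Bw !ffunE eqxx.
Qed.

Lemma strat_anti (R : realFieldType) (d : nat) (P : 'I_d -> bool -> bool -> bool -> R)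
  (s t : 'I_d) (st : s != t) a0 b0 c0 :
  win_prob P [ffun a => if a == a0 then s else t] [ffun a => if a == b0 then s else t]
    [ffun a => if a == c0 then s else t] = P s a0 b0 c0 + P t (~~a0) (~~b0) (~~c0).
Proof.
have ts : (t == s) = false by rewrite eq_sym; apply/negbTE.
have st' := negbTE st.
rewrite win_term; case: a0; case: b0; case: c0;
rewrite !big_bool /term /Bw !ffunE /= ?eqxx ?st' ?ts /=; lra.
Qed.

Theorem mainTheorem8 (R : realFieldType) (d : nat) (hd : (2 <= d)%N)
  (P : 'I_d -> bool -> bool -> bool -> R) (hP : is_distr P) :
  omega_c P =
  \big[Num.max/0]_(st : 'I_d * 'I_d | st.1 != st.2)
    Num.max (marginalX P st.1)
    (Num.max (P st.1 false false false + P st.2 true true true)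
    (Num.max (P st.1 true false false + P st.2 false true true)
    (Num.max (P st.1 false true false + P st.2 true false true)
             (P st.1 false false true + P st.2 true true false)))).
Proof.
change (omega_c P = rhs P).
have h0 : (0 < d)%N by apply: leq_trans hd.
have r0 : 0 <= rhs P := le_trans (marg_ge0 hP (Ordinal h0)) (marg_le hd P _).
apply/le_anti/andP; split.
  apply: bigmax_leX => // -[[f g] h] _ /=.
  case: (eqVneq (f true) (f false)) => ef.
    apply: le_trans (win_le_marg hP (s := f false) _) (marg_le hd P _).
    by move=> [] b c.
  case: (eqVneq (g true) (g false)) => eg.
    apply: le_trans (win_le_marg hP (s := g false) _) (marg_le hd P _).
    by move=> a b c /andP[/eqP <- _]; case: b.
  case: (eqVneq (h true) (h false)) => eh.
    apply: le_trans (win_le_marg hP (s := h false) _) (marg_le hd P _).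
    by move=> a b c /andP[_ /eqP <-]; case: c.
  case: (boolP [exists w : bool * bool * bool, Bw f g h w.1.1 w.1.2 w.2]).
    by move=> /existsP [[[a b] c] Hw]; apply: (up_inj hP ef eg eh Hw).
  move=> /existsPn none.
  rewrite win_term big1 // => a _; rewrite big1 // => b _; rewrite big1 // => c _.
  by apply: termF; apply: negbTE (none (a, b, c)).
have o0 : 0 <= omega_c P.
  apply: le_trans (omega_ge P [ffun=> Ordinal h0] [ffun=> Ordinal h0] [ffun=> Ordinal h0]).
  by rewrite strat_const; apply: marg_ge0.
apply: bigmax_leX => // -[s t] /= st.
have A := fun a b c => omega_ge P [ffun x => if x == a then s else t]
   [ffun x => if x == b then s else t] [ffun x => if x == c then s else t].
rewrite !ge_max -!(strat_anti P st) !A andbT /=.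
by rewrite -strat_const omega_ge.
Qed.
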